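(* For every integer $t\ge1$, $\liminf_{n\to\infty}\frac{\mathrm{orsat}(n,K_{t+2})}{n^{3/2}}=\frac{\sqrt t}{2}$.
   Context: All graphs are finite and simple. A graph is regular if all vertices have the same degree. For a graph $F$, a graph $G$ is $F$-oversaturated if for every pair $e$ of non-adjacent vertices of $G$, the graph obtained from $G$ by adding the edge $e$ contains a copy of $F$ that uses the edge $e$ ($G$ itself need not be $F$-free). $\mathrm{orsat}(n,F)$ denotes the smallest number of edges of a regular $n$-vertex $F$-oversaturated graph. $K_r$ denotes the complete graph on $r$ vertices. *)

(* Defs.v *)
From mathcomp Require Import all_boot all_order.
From mathcomp Require Import boolp.
Set Implicit Arguments. Unset Strict Implicit. Unset Printing Implicit Defensive.

Definition simple_graph n (e : rel 'I_n) : Prop :=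
  (forall u v, e u v = e v u) /\ (forall u, ~~ e u u).

Definition nedges n (e : rel 'I_n) : nat :=
  #|[set p : 'I_n * 'I_n | (p.1 < p.2) && e p.1 p.2]|.

Definition regular n (e : rel 'I_n) : Prop :=
  exists d, forall v : 'I_n, #|[set w | e v w]| = d.

Definition add_edge n (e : rel 'I_n) (x y : 'I_n) : rel 'I_n :=
  fun u v => [|| e u v, (u == x) && (v == y) | (u == y) && (v == x)].

Definition has_Kr_using n (r : nat) (e : rel 'I_n) (x y : 'I_n) : Prop :=
  exists f : 'I_r -> 'I_n,
    injective f /\
    (forall i j, i != j -> add_edge e x y (f i) (f j)) /\
    (exists i j, f i = x /\ f j = y).

Definition Kr_oversaturated n (r : nat) (e : rel 'I_n) : Prop :=
  forall x y : 'I_n, x != y -> ~~ e x y -> has_Kr_using r e x y.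

Definition orsat_pred (r n m : nat) : Prop :=
  exists e : rel 'I_n,
    [/\ simple_graph e, regular e, Kr_oversaturated r e & nedges e = m].

Lemma orsat_exists r n : exists m, `[< orsat_pred r n m >].
Proof.
exists (nedges (fun u v : 'I_n => u != v)); apply/asboolP.
exists (fun u v : 'I_n => u != v); split => //.
- split => [u v|u]; [by rewrite eq_sym | by rewrite eqxx].
- exists #|'I_n|.-1 => v; rewrite -(cardsC1 v); apply: eq_card => w.
  by rewrite !inE eq_sym.
- by move=> x y -> .
Qed.

Definition orsat (n r : nat) : nat := ex_minn (orsat_exists r n).

(* Main.v *)
Require Import Defs.
From mathcomp Require Import all_boot all_order all_algebra.
From mathcomp Require Import all_classical all_reals all_analysis.
From mathcomp Require Import zify ring lra.
Import Order.TTheory GRing.Theory Num.Theory.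
Set Implicit Arguments. Unset Strict Implicit. Unset Printing Implicit Defensive.

Module Comb.
Import mathcomp.boot.fintype mathcomp.boot.finset mathcomp.boot.bigop.

Lemma card_pairs (T : finType) (P : T -> T -> bool) :
  #|[set q : T * T | P q.1 q.2]| = \sum_x #|[set y | P x y]|.
Proof.
rewrite -sum1_card big_mkcond /=.
rewrite (eq_bigr (fun q => (fun x y => if P x y then 1 else 0) q.1 q.2)); last first.
  by move=> q _; rewrite inE.
rewrite -(pair_big predT predT (fun x y => if P x y then 1 else 0)) /=.
apply: eq_big => // x _; symmetry; rewrite -sum1_card big_mkcond /=; apply: eq_big => // y _.
by rewrite inE.
Qed.

Lemma handshake n (e : rel 'I_n) d : simple_graph e ->
  (forall v, #|[set w | e v w]| = d) -> (nedges e).*2 = n * d.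
Proof.
move=> [esym eirr] reg.
have hC : #|[set q : 'I_n * 'I_n | e q.1 q.2]| = n * d.
  by rewrite card_pairs (eq_bigr (fun _ => d)) ?sum_nat_const ?card_ord // => x _.
set A := [set q : 'I_n * 'I_n | (q.1 < q.2) && e q.1 q.2].
set sw := fun q : 'I_n * 'I_n => (q.2, q.1).
have swK : involutive sw by case.
have hB : #|sw @: A| = #|A| by rewrite card_imset //; apply: inv_inj.
rewrite -hC /nedges -/A.
have -> : [set q : 'I_n * 'I_n | e q.1 q.2] = A :|: sw @: A.
  apply/setP => -[x y]; rewrite !inE /=; apply/idP/idP.
  - move=> exy; case: (ltngtP x y) => [lxy|lyx|exy'].
    + by rewrite exy.
    + apply/orP; right; apply/imsetP; exists (y, x) => //.
      by rewrite inE /= lyx esym.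
    + have xy : x = y by apply: val_inj.
      by move: exy; rewrite xy (negbTE (eirr y)).
  - case/orP => [/andP[_ //]|/imsetP[[a b]]]; rewrite inE /= => /andP[_ eab] [-> ->].
    by rewrite esym.
rewrite cardsU hB.
have -> : A :&: sw @: A = set0.
  apply/setP => -[x y]; rewrite !inE /=; apply/negP => /andP[/andP[lxy _]].
  case/imsetP => -[a b]; rewrite inE /= => /andP[lab _] [ea eb].
  by move: lxy; rewrite ea eb ltnNge ltnW.
by rewrite cards0 subn0 addnn.
Qed.

Lemma common_ge n t (e : rel 'I_n) : simple_graph e -> Kr_oversaturated t.+2 e ->
  forall x y, x != y -> ~~ e x y -> t <= #|[set w | e w x && e w y]|.
Proof.
move=> [esym eirr] ov x y nxy nexy.
have [f [finj [fadj [i [j [fi fj]]]]]] := ov x y nxy nexy.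
have nij : i != j by apply: contra nxy => /eqP ij; rewrite -fi -fj ij.
set S := [set: 'I_t.+2] :\ i :\ j.
have cS : #|S| = t.
  have h1 := cardsD1 i [set: 'I_t.+2]; have h2 := cardsD1 j ([set: 'I_t.+2] :\ i).
  rewrite cardsT card_ord !inE /= in h1; rewrite !inE eq_sym nij /= in h2.
  rewrite h2 !add1n in h1; by case: h1.
rewrite -cS -(card_imset _ finj); apply: subset_leq_card.
apply/subsetP => z /imsetP[k]; rewrite !inE => /andP[nkj /andP[nki _]] ->.
have fkx : f k != x by rewrite -fi (inj_eq finj).
have fky : f k != y by rewrite -fj (inj_eq finj).
have := fadj k i nki; have := fadj k j nkj.
rewrite /add_edge fi fj (negbTE fkx) (negbTE fky) /= !orbF.
by move=> -> ->.
Qed.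

Lemma lower_count n t (e : rel 'I_n) d : simple_graph e -> Kr_oversaturated t.+2 e ->
  (forall v, #|[set w | e v w]| = d) -> 0 < n ->
  t * (n - 1 - d) <= d * (d - 1).
Proof.
move=> sg ov reg n0; have [esym eirr] := sg.
have key : \sum_x \sum_(y | x != y) #|[set w | e w x && e w y]| = n * (d * (d - 1)).
  transitivity (\sum_x \sum_(y | x != y) \sum_w ((e w x && e w y) : nat)).
    by apply: eq_bigr => x _; apply: eq_bigr => y _; rewrite -sum1_card big_mkcond /=;
      apply: eq_bigr => w _; rewrite inE; case: (_ && _).
  transitivity (\sum_(x : 'I_n) \sum_w \sum_(y | x != y) ((e w x && e w y) : nat)).
    by apply: eq_bigr => x _; rewrite exchange_big.
  rewrite exchange_big /=.
  transitivity (\sum_(w : 'I_n) d * (d - 1)); last by rewrite sum_nat_const card_ord.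
  apply: eq_bigr => w _.
  rewrite (bigID (fun x => e w x)) /= [X in _ + X]big1 ?addn0; last first.
    by move=> x /negbTE ->; rewrite big1.
  rewrite (eq_bigr (fun _ => d - 1)).
    rewrite sum_nat_const -(reg w); congr (_ * _); apply: eq_card => x; by rewrite inE.
  move=> x ewx.
  have h := cardsD1 x [set y | e w y]; rewrite inE ewx reg in h.
  have -> : d - 1 = #|[set y | e w y] :\ x| by rewrite h add1n subn1.
  rewrite -sum1_card big_mkcond [RHS]big_mkcond /=; apply: eq_bigr => y _.
  rewrite !inE eq_sym ewx; by case: (y == x); case: (e w y).
have cnt x : \sum_(y | (x != y) && ~~ e x y) t = n * 0 + t * (n - 1 - d).
  rewrite muln0 add0n sum_nat_const mulnC; congr (_ * _).
  have hc := cardsC (x |: [set y | e x y]).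
  rewrite cardsU1 inE (eirr x) reg cardT size_enum_ord in hc.
  transitivity #|~: (x |: [set y | e x y])|; last by move: hc; set k := #|~: _| => hc; lia.
  by apply: eq_card => y; rewrite !inE negb_or eq_sym.
rewrite -(leq_pmul2l n0) -key.
have -> : n * (t * (n - 1 - d)) = \sum_(x : 'I_n) \sum_(y | (x != y) && ~~ e x y) t.
  by rewrite (eq_bigr _ (fun x _ => cnt x)) sum_nat_const card_ord muln0 add0n.
apply: leq_sum => x _.
rewrite [X in _ <= X](bigID (fun y => ~~ e x y)) /=.
apply: leq_trans (leq_addr _ _); apply: leq_sum => y /andP[nxy nexy].
by apply: (common_ge sg ov); rewrite // eq_sym.
Qed.

Lemma orsat_lower n t : 0 < n -> exists d,
  (orsat n t.+2).*2 = n * d /\ t * (n - 1 - d) <= d * (d - 1).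
Proof.
move=> n0; rewrite /orsat; case: ex_minnP => m /asboolP [e [sg [d reg] ov ne]] _.
exists d; split; first by rewrite -ne (handshake sg reg).
exact: lower_count sg ov reg n0.
Qed.

Lemma orsat_upper n r m : orsat_pred r n m -> orsat n r <= m.
Proof.
move=> h; rewrite /orsat; case: ex_minnP => k _ /(_ m); apply; exact/asboolP.
Qed.

Lemma transport (V : finType) r (g : rel V) D :
  (forall x y, g x y = g y x) -> (forall x, ~~ g x x) ->
  (forall x, #|[set y | g x y]| = D) ->
  (forall x y, x != y -> ~~ g x y -> exists f : 'I_r -> V,
     (forall i j, i != j -> [|| g (f i) (f j), (f i == x) && (f j == y) | (f i == y) && (f j == x)])
     /\ exists i j, f i = x /\ f j = y) ->
  exists m, orsat_pred r #|V| m /\ m.*2 = #|V| * D.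
Proof.
move=> gsym girr greg gov.
pose e : rel 'I_#|V| := fun u v => g (enum_val u) (enum_val v).
have sg : simple_graph e by split => [u v|u]; [exact: gsym | exact: girr].
have reg : forall v, #|[set w | e v w]| = D.
  move=> v; rewrite -(greg (enum_val v)) -(card_imset _ (@enum_rank_inj V)).
  apply: eq_card => w; rewrite inE; apply/idP/imsetP.
  - by move=> h; exists (enum_val w); rewrite ?inE ?enum_valK.
  - by case=> y; rewrite inE => h ->; rewrite /e enum_rankK.
exists (nedges e); split; last exact: handshake sg reg.
exists e; split => //; first by exists D.
move=> x y nxy nexy.
have nxy' : enum_val x != enum_val y by apply: contra nxy => /eqP/enum_val_inj ->.
have [f [fadj [i [j [fi fj]]]]] := gov _ _ nxy' nexy.
have fadj' : forall i j, i != j -> add_edge e x y (enum_rank (f i)) (enum_rank (f j)).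
  move=> k l nkl; rewrite /add_edge /e !enum_rankK.
  have := fadj k l nkl.
  by rewrite -!(can2_eq enum_rankK enum_valK).
exists (fun k => enum_rank (f k)); split; last first.
  by split => //; exists i, j; rewrite fi fj !enum_valK.
move=> k l ekl; apply/eqP; apply: contraT => nkl.
have := fadj' k l nkl; rewrite ekl /add_edge.
have := (proj2 sg) (enum_rank (f l)); rewrite /e => /negbTE ->.
case: (enum_rank (f l) == x) / eqP => [->|h1]; case: (enum_rank (f l) == y) / eqP => [h2|h2] //=.
- by rewrite (negbTE nxy).
- by rewrite (negbTE nxy).
Qed.

Local Open Scope ring_scope.

Definition HV (p : nat) := (('F_p * 'F_p) + option 'F_p)%type.

Definition hadj p (x y : HV p) : bool :=
  match x, y with
  | inl (a, b), inl (c, d) => a * c == b + d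
  | inl (a, _), inr (Some m) => a == m
  | inr (Some m), inl (a, _) => a == m
  | inl _, inr None => false
  | inr None, inl _ => false
  | inr (Some _), inr (Some _) => false
  | inr (Some _), inr None => true
  | inr None, inr (Some _) => true
  | inr None, inr None => true
  end.

Lemma hadj_sym p (x y : HV p) : hadj x y = hadj y x.
Proof.
case: x => [[a b]|[m|]]; case: y => [[c d]|[m'|]] //=.
by rewrite mulrC addrC.
Qed.

Definition gnb p (x : HV p) (o : option 'F_p) : HV p :=
  match x, o with
  | inl (a, b), Some c => inl (c, a * c - b)
  | inl (a, b), None => inr (Some a)
  | inr (Some m), Some b => inl (m, b)
  | inr (Some m), None => inr None
  | inr None, Some m => inr (Some m)
  | inr None, None => inr None
  end.

Lemma gnb_inj p (x : HV p) : injective (gnb x).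
Proof.
case: x => [[a b]|[m|]] [c|] [c'|] //=; by case=> ->.
Qed.

Lemma gnb_im p (x : HV p) : [set y | hadj x y] = gnb x @: setT.
Proof.
apply/setP => y; rewrite inE; apply/idP/imsetP.
- case: x => [[a b]|[m|]]; case: y => [[c d]|[m'|]] //=.
  + move/eqP => h; exists (Some c) => //; congr inl; congr pair.
    by rewrite h [b + d]addrC addrK.
  + by move/eqP => <-; exists None.
  + by move/eqP => ->; exists (Some d).
  + by move=> _; exists None.
  + by move=> _; exists (Some m').
  + by move=> _; exists None.
- case=> o _ ->; case: x => [[a b]|[m|]]; case: o => [c|] //=.
  by rewrite addrC subrK.
Qed.

Lemma hn_card p (x : HV p) : prime p -> #|[set y | hadj x y]| = p.+1.
Proof.
move=> pp; rewrite gnb_im card_imset; last exact: gnb_inj.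
by rewrite cardsT card_option card_Fp.
Qed.

Lemma two_neq0 p : prime p -> (2 < p)%N -> (2%:R : 'F_p) != 0.
Proof.
move=> pp p2; apply/eqP => h; have := val_Fp_nat pp 2.
by rewrite h modn_small.
Qed.

Lemma double0 p (a : 'F_p) : prime p -> (2 < p)%N -> a + a = 0 -> a = 0.
Proof.
move=> pp p2 h; have : (2%:R : 'F_p) * a = 0 by rewrite mulr_natl mulr2n.
by move/eqP; rewrite mulf_eq0 (negbTE (two_neq0 pp p2)) /= => /eqP.
Qed.

Definition mate p (x : HV p) : HV p :=
  match x with
  | inl (a, b) => if a == 0 then inr None else inl (- a, b)
  | inr None => inl (0, 0)
  | inr (Some m) => inr (Some m)
  end.

Lemma mate_props p (x : HV p) : prime p -> (2 < p)%N -> hadj x x ->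
  [/\ hadj (mate x) (mate x), mate (mate x) = x & ~~ hadj x (mate x)].
Proof.
move=> pp p2; case: x => [[a b]|[m|]] //=.
- move/eqP => hab; case: (a =P 0) => [a0|/eqP a0].
  + have b0 : b = 0 by apply: (double0 pp p2); rewrite -hab a0 mulr0.
    by rewrite a0 b0.
  + rewrite /= oppr_eq0 (negbTE a0) opprK mulrNN hab eqxx; split => //.
    apply/negP => /eqP h; apply/negP: a0; apply/negPn.
    have : a * a + a * a = 0 by rewrite {1}hab -h mulrN addrC subrr.
    by move/(double0 pp p2)/eqP; rewrite mulf_eq0 orbb.
Qed.

Definition Mrel p (x y : HV p) := hadj x x && (y == mate x).

Lemma Mrel_sym p (x y : HV p) : prime p -> (2 < p)%N -> Mrel x y = Mrel y x.
Proof.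
move=> pp p2.
have H : forall x y : HV p, Mrel x y -> Mrel y x.
  move=> u v /andP[huu /eqP ->]; have [h1 h2 _] := mate_props pp p2 huu.
  by rewrite /Mrel h1 h2 eqxx.
by apply/idP/idP => /H.
Qed.

Lemma Mrel_nadj p (x y : HV p) : prime p -> (2 < p)%N -> Mrel x y -> ~~ hadj x y.
Proof.
by move=> pp p2 /andP[hxx /eqP ->]; have [_ _ ?] := mate_props pp p2 hxx.
Qed.

Definition Sx p (x : HV p) := [set y | [|| y == x, hadj x y | Mrel x y]].

Lemma Sx_card p (x : HV p) : prime p -> (2 < p)%N -> #|Sx x| = p.+2.
Proof.
move=> pp p2; case hxx: (hadj x x).
- have [_ _ nm] := mate_props pp p2 hxx.
  have -> : Sx x = mate x |: [set y | hadj x y].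
    apply/setP => y; rewrite !inE /Mrel hxx /=.
    case: (y =P x) => [->|_]; first by rewrite hxx orbT.
    by rewrite /= orbC.
  by rewrite cardsU1 inE (negbTE nm) hn_card.
- have -> : Sx x = x |: [set y | hadj x y].
    by apply/setP => y; rewrite !inE /Mrel hxx /= orbF.
  by rewrite cardsU1 inE hxx hn_card.
Qed.

Lemma common p (x y : HV p) : x != y -> ~~ hadj x y -> exists w, hadj x w && hadj y w.
Proof.
case: x => [[a b]|[m|]]; case: y => [[c d]|[m'|]] //= nxy nadj.
- case: (a =P c) => [ac|/eqP ac].
  + by exists (inr (Some a)); rewrite /= eqxx ac eqxx.
  + exists (inl ((b - d) / (a - c), a * ((b - d) / (a - c)) - b)); apply/andP; split.
      by rewrite addrCA subrr addr0.
    apply/eqP; have ac' : a - c != 0 by rewrite subr_eq0.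
    by field.
- exists (inl (m', a * m' - b)); rewrite /= eqxx andbT.
  by rewrite addrCA subrr addr0.
- by exists (inr (Some a)); rewrite /= eqxx.
- exists (inl (m, c * m - d)); rewrite /= eqxx /=.
  by rewrite addrCA subrr addr0.
- by exists (inr None).
- by exists (inr (Some c)); rewrite /= eqxx.
Qed.

Definition VV (p t : nat) : finType := (HV p * 'I_t)%type.

Definition gadj p t (u v : VV p t) : bool :=
  (u != v) && [|| u.1 == v.1, hadj u.1 v.1 | Mrel u.1 v.1].

Lemma construction p t : prime p -> (2 < p)%N -> exists m,
  orsat_pred t.+2 #|VV p t| m /\
  m.*2 = #|VV p t| * (p.+2 * t).-1.
Proof.
move=> pp p2.
apply: (@transport _ _ (@gadj p t)).
- move=> u v; rewrite /gadj eq_sym [u.1 == _]eq_sym hadj_sym Mrel_sym //.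
- by move=> u; rewrite /gadj eqxx.
- move=> u.
  have h := cardsD1 u (setX (Sx u.1) [set: 'I_t]).
  rewrite cardsX Sx_card // cardsT card_ord !inE eqxx /= in h.
  rewrite h add1n /=; apply: eq_card => v; rewrite !inE andbT /gadj.
  by rewrite eq_sym [v.1 == _]eq_sym.
- move=> [x i] [y j] nuv; rewrite /gadj nuv /= => /norP[nxy /norP[nh nM]].
  have [w /andP[hxw hyw]] := common nxy nh.
  have nwx : w != x by apply: contraNneq nh => wx; rewrite -wx hadj_sym.
  have nwy : w != y by apply: contraNneq nh => wy; rewrite -wy.
  pose f := fun k : 'I_t.+2 => match @split 2 t k with
            | inl a => if a == ord0 then (x, i) else (y, j)
            | inr b => (w, b) end.
  exists f; split; last first.
    exists (lshift t (ord0 : 'I_2)), (lshift t (1 : 'I_2)).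
    by rewrite /f !(unsplitK (inl _)).
  move=> k l nkl.
  have nsp : @split 2 t k != @split 2 t l.
    by apply: contra nkl => /eqP h; rewrite -(@splitK 2 t k) -(@splitK 2 t l) h.
  move: nsp; rewrite /f; case: (@split 2 t k) => [a|b]; case: (@split 2 t l) => [a'|b'] nsp.
  - case: (a =P ord0) => [ea|/eqP a0]; case: (a' =P ord0) => [ea'|/eqP a0'] /=.
    + by rewrite ea ea' eqxx in nsp.
    + by rewrite !eqxx orbT.
    + by rewrite !eqxx !orbT.
    + exfalso; have aa : a = a'.
        apply: val_inj; move: a0 a0' (ltn_ord a) (ltn_ord a').
        rewrite -!(inj_eq val_inj) /=; lia.
      by rewrite aa eqxx in nsp.
  - case: (a == ord0); rewrite /gadj /= xpair_eqE negb_and.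
    + by rewrite (eq_sym x w) (negbTE nwx) hxw orbT.
    + by rewrite (eq_sym y w) (negbTE nwy) hyw orbT.
  - case: (a' == ord0); rewrite /gadj /= xpair_eqE negb_and.
    + by rewrite (negbTE nwx) hadj_sym hxw orbT.
    + by rewrite (negbTE nwy) hadj_sym hyw orbT.
  - rewrite /gadj /= xpair_eqE eqxx /=.
    rewrite andbT; apply/orP; left; by apply: contra nsp => /eqP ->.
Qed.

Lemma VV_card p t : prime p -> #|VV p t| = ((p * p + p.+1) * t)%N.
Proof.
move=> pp; rewrite /VV card_prod card_sum card_prod card_option card_Fp // card_ord.
by [].
Qed.

End Comb.
Import Comb.
Local Open Scope ring_scope.

Lemma liminf_char (R : realType) (u : nat -> R) (l : R) :
  (forall e : R, 0 < e -> exists N, forall n, (N <= n)%N -> l - e <= u n) ->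
  (forall e : R, 0 < e -> forall N, exists n, (N <= n)%N /\ u n <= l + e) ->
  limn_einf (fun n => (u n)%:E) = l%:E.
Proof.
move=> hL hU; rewrite limn_einf_lim; apply/eqP; rewrite eq_le; apply/andP; split.
- apply: lime_le; first exact: is_cvg_einfs.
  apply: nearW => n; apply/lee_addgt0Pr => e e0.
  have [m [nm hm]] := hU e e0 n.
  apply: ge_ereal_inf; exists (u m)%:E; first by exists m.
  by rewrite -EFinD lee_fin.
- apply/lee_subgt0Pr => e e0.
  apply: lime_ge; first exact: is_cvg_einfs.
  have [N hN] := hL e e0.
  exists N => // n /= Nn; apply: le_ereal_inf_tmp => _ [m /= nm <-].
  by rewrite -EFinB lee_fin hN // (leq_trans Nn nm).
Qed.

Lemma pow32 (R : realType) (x : R) : 0 <= x -> x `^ (3 / 2) = x * Num.sqrt x.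
Proof.
move=> x0; have -> : (3 / 2 : R) = 1 + 2^-1 by field.
rewrite powRD; last by apply/implyP => /eqP; lra.
by rewrite powRr1 // powR12_sqrt.
Qed.

Lemma low_real (R : realType) (q d s del : R) : 0 < q -> 0 <= d -> 1 <= s -> 0 < del ->
  del <= q -> (q ^+ 2 * q + q ^+ 2) / (del * q) <= s ->
  q ^+ 2 * (s ^+ 2 - 1 - d) <= d ^+ 2 -> q - del <= d / s.
Proof.
move=> q0 d0 s1 de0 deq hs hd.
have s0 : 0 < s by lra.
rewrite ler_pdivlMr //; rewrite leNgt; apply/negP => hc.
set c := q - del.
have c0 : 0 <= c by rewrite /c; lra.
have h1 : d ^+ 2 <= (c * s) ^+ 2 by rewrite ler_sqr ?nnegrE ?mulr_ge0 ?(ltW s0) // ltW.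
have h2 : (q ^+ 2 - c ^+ 2) * s ^+ 2 < q ^+ 2 + q ^+ 2 * c * s.
  have : q ^+ 2 * d < q ^+ 2 * (c * s) by rewrite ltr_pM2l // exprn_gt0.
  rewrite exprMn in h1; nra.
have h3 : (q ^+ 2 - c ^+ 2) * s < q ^+ 2 + q ^+ 2 * c.
  rewrite -(ltr_pM2r s0).
  have hq : q ^+ 2 <= q ^+ 2 * s by rewrite ler_peMr // exprn_ge0 // ltW.
  nra.
have h4 : del * q <= q ^+ 2 - c ^+ 2 by rewrite /c; nra.
have h5 : q ^+ 2 * q + q ^+ 2 <= del * q * s.
  move: hs; rewrite ler_pdivrMr ?mulr_gt0 //; lra.
nra.
Qed.

Lemma up_real (R : realType) (o n P t : R) : 0 < t -> 1 <= P -> P ^+ 2 * t <= n ->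
  2 * o <= n * ((P + 2) * t) -> o / (n * Num.sqrt n) <= Num.sqrt t / 2 + Num.sqrt t / P.
Proof.
move=> t0 P1 hn ho.
set q := Num.sqrt t.
have q0 : 0 < q by rewrite sqrtr_gt0.
have tq : t = q ^+ 2 by rewrite sqr_sqrtr // ltW.
have P0 : 0 < P by lra.
have n0 : 0 < n by apply: lt_le_trans hn; rewrite mulr_gt0 // exprn_gt0.
have hs : P * q <= Num.sqrt n.
  have hPq : 0 <= P * q by rewrite mulr_ge0 ?ltW.
  rewrite -(ger0_norm hPq) -sqrtr_sqr ler_sqrt ?exprMn -?tq //.
  by apply: ltW; apply: lt_le_trans hn; rewrite mulr_gt0 // exprn_gt0.
have sn0 : 0 < Num.sqrt n by rewrite sqrtr_gt0.
rewrite ler_pdivrMr ?mulr_gt0 //.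
have e : (q / 2 + q / P) * (P * q) = (P + 2) * t / 2.
  rewrite tq; field; lra.
have k0 : 0 <= (q / 2 + q / P) * n by rewrite mulr_ge0 ?addr_ge0 ?divr_ge0 ?ltW.
have h := ler_wpM2l k0 hs.
have e2 : (q / 2 + q / P) * n * (P * q) = (P + 2) * t / 2 * n by rewrite mulrAC e.
rewrite e2 in h; rewrite mulrA; lra.
Qed.

Unset Implicit Arguments.


Theorem theorem1p5 (R : realType) (t : nat) : (1 <= t)%N ->
  limn_einf (fun n : nat =>
      (((orsat n t.+2)%:R / (n%:R `^ (3 / 2) : R)) : R)%:E)
  = (Num.sqrt (t%:R : R) / 2)%:E.
Proof.
move=> t1.
set q := Num.sqrt (t%:R : R).
have t0 : 0 < (t%:R : R) by rewrite ltr0n.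
have q0 : 0 < q by rewrite sqrtr_gt0.
have tq : (t%:R : R) = q ^+ 2 by rewrite sqr_sqrtr // ltW.
apply: liminf_char.
- move=> e e0.
  have [small|big] := lerP (q / 2 - e) 0.
    exists 0%N => n _; apply: le_trans small _.
    by rewrite divr_ge0 // powR_ge0.
  set del := 2 * e.
  have de0 : 0 < del by rewrite /del; lra.
  have deq : del <= q by rewrite /del; lra.
  set K := (q ^+ 2 * q + q ^+ 2) / (del * q).
  exists (Num.trunc (K ^+ 2)).+1 => n hn.
  have n0 : (0 < n)%N by apply: leq_trans hn.
  have nR0 : 0 < (n%:R : R) by rewrite ltr0n.
  set s := Num.sqrt (n%:R : R).
  have s0 : 0 < s by rewrite sqrtr_gt0.
  have ns : (n%:R : R) = s ^+ 2 by rewrite sqr_sqrtr // ltW.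
  have hK : K <= s.
    have h1 : K ^+ 2 < n%:R.
      apply: lt_le_trans (truncnS_gt _) _.
      by rewrite ler_nat.
    have K0 : 0 <= K.
      rewrite /K; apply: divr_ge0; last by rewrite mulr_ge0 ?ltW.
      by rewrite addr_ge0 ?mulr_ge0 ?exprn_ge0 ?ltW.
    rewrite -(ger0_norm K0) -sqrtr_sqr /s ler_sqrt ?ltW //.
  have s1 : 1 <= s.
    rewrite -sqrtr1 ler_sqrt // ler1n //.
  have [d [hod hd]] := orsat_lower t n0.
  have hnat : (t * n <= d * d + t * d.+1)%N by nia.
  have hreal : q ^+ 2 * (s ^+ 2 - 1 - d%:R) <= (d%:R) ^+ 2.
    have := hnat; rewrite -(ler_nat R) natrD !natrM -tq -ns => h.
    move: h; rewrite -addn1 natrD => h; rewrite expr2; nra.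
  have := @low_real R _ _ _ _ q0 (ler0n _ d) s1 de0 deq hK hreal.
  have ho : ((orsat n t.+2)%:R : R) = n%:R * d%:R / 2.
    have := congr1 (fun k : nat => (k%:R : R)) hod; rewrite /= natrM -muln2 natrM => <-.
    by field.
  rewrite pow32 ?ler0n // ho -/s => h.
  have -> : n%:R * d%:R / 2 / (n%:R * s) = (d%:R / s) / 2 :> R.
    by field; rewrite ?gt_eqF.
  rewrite /del in h; lra.
- move=> e e0 N.
  have [p hp pp] := prime_above (maxn N (maxn 2 (Num.trunc (q / e)))).
  have p2 : (2 < p)%N by move: hp; rewrite !gtn_max => /and3P[].
  have [m [hm hm2]] := construction t pp p2.
  rewrite VV_card // in hm hm2.
  set n := ((p * p + p.+1) * t)%N in hm hm2 *.
  exists n; split.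
    by rewrite /n; move: hp; rewrite !gtn_max => /and3P[hN _ _]; nia.
  have ho := orsat_upper hm.
  have hnat : ((orsat n t.+2) * 2 <= n * (p.+2 * t))%N.
    have : (m.*2 <= n * (p.+2 * t))%N by rewrite hm2 leq_mul2l leq_pred orbT.
    by rewrite -muln2; apply: leq_trans; rewrite leq_mul2r ho orbT.
  have hP : 1 <= (p%:R : R) by rewrite ler1n prime_gt0.
  have hn : (p%:R : R) ^+ 2 * t%:R <= n%:R.
    by rewrite -natrX -natrM ler_nat /n; nia.
  have h2 : 2 * ((orsat n t.+2)%:R : R) <= n%:R * ((p%:R + 2) * t%:R).
    move: hnat; rewrite -(ler_nat R) !natrM => h.
    move: h; rewrite -[p.+2]addn2 natrD => h; lra.
  have := @up_real R _ _ _ _ t0 hP hn h2.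
  rewrite pow32 ?ler0n // -/q => h; apply: le_trans h _.
  rewrite lerD2l ler_pdivrMr ?(lt_le_trans ltr01 hP) //.
  have hqe : q / e < p%:R.
    apply: lt_le_trans (truncnS_gt _) _; rewrite ler_nat.
    by move: hp; rewrite !gtn_max => /and3P[].
  by move: hqe; rewrite ltr_pdivrMr // mulrC => /ltW.
Qed.
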